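(* Let $(X,d)$ be a metric space. Then $X$ is complete if and only if $(P_{USCB}(X),H_{\rm send})$ is complete.
   Context: $X\times[0,1]$ is metrized by $\overline{d}((x,\alpha),(y,\beta))=d(x,y)+|\alpha-\beta|$. For a subset $u\subseteq X\times[0,1]$ and $\alpha\in[0,1]$ put $[u]_\alpha=\{x\in X:(x,\alpha)\in u\}$. $P_{USCB}(X)$ is the set of subsets $u\subseteq X\times[0,1]$ such that $[u]_\alpha=\bigcap_{\beta<\alpha}[u]_\beta$ for all $\alpha\in(0,1]$ and $[u]_\alpha$ is a non-empty compact subset of $X$ for all $\alpha\in[0,1]$ (each such $u$ is then a non-empty compact subset of $X\times[0,1]$). For $u,v\in P_{USCB}(X)$, $H_{\rm send}(u,v)=H(u,v)$, where $H(A,B)=\max\{\sup_{a\in A}\inf_{b\in B}\overline{d}(a,b),\sup_{b\in B}\inf_{a\in A}\overline{d}(a,b)\}$ is the Hausdorff metric on non-empty compact subsets of $X\times[0,1]$. *)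

(* Defs.v *)
From HB Require Import structures.
From mathcomp Require Import all_boot all_order all_algebra.
From mathcomp Require Import all_classical all_reals.
From Stdlib Require Lists.List.
Set Implicit Arguments. Unset Strict Implicit. Unset Printing Implicit Defensive.
Import Order.TTheory GRing.Theory Num.Theory.
Local Open Scope classical_set_scope.
Local Open Scope ring_scope.

Section Defs.
Variables (R : realType).

Definition is_metric (X : Type) (d : X -> X -> R) : Prop :=
  (forall x y, d x y = 0 <-> x = y) /\
  (forall x y, d x y = d y x) /\
  (forall x y z, d x z <= d x y + d y z).

Definition open_in (X : Type) (d : X -> X -> R) (U : set X) : Prop :=
  forall x, U x -> exists2 e : R, 0 < e & forall y, d x y < e -> U y.

Definition compact_in (X : Type) (d : X -> X -> R) (K : set X) : Prop :=
  forall (I : Type) (U : I -> set X), (forall i, open_in d (U i)) ->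
    (forall x, K x -> exists i, U i x) ->
    exists s : list I, forall x, K x -> exists i, Stdlib.Lists.List.In i s /\ U i x.

Definition complete_wrt (T : Type) (S : set T) (dist : T -> T -> R) : Prop :=
  forall u : nat -> T, (forall n, S (u n)) ->
    (forall e : R, 0 < e -> exists N : nat, forall m n : nat,
        (N <= m)%N -> (N <= n)%N -> dist (u m) (u n) < e) ->
    exists2 l : T, S l & forall e : R, 0 < e -> exists N : nat,
        forall n : nat, (N <= n)%N -> dist (u n) l < e.

(* the metric dbar on X x [0,1] (points represented in X * R) *)
Definition dbar (X : Type) (d : X -> X -> R) (p q : X * R) : R :=
  d p.1 q.1 + `|p.2 - q.2|.

Definition cut (X : Type) (u : set (X * R)) (alpha : R) : set X :=
  [set x | u (x, alpha)].

Definition P_USCB (X : Type) (d : X -> X -> R) (u : set (X * R)) : Prop :=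
  (forall p, u p -> 0 <= p.2 <= 1) /\
  (forall alpha : R, 0 < alpha <= 1 ->
     cut u alpha = [set x | forall beta : R, 0 <= beta < alpha -> cut u beta x]) /\
  (forall alpha : R, 0 <= alpha <= 1 ->
     (exists x, cut u alpha x) /\ compact_in d (cut u alpha)).

Definition excess (T : Type) (dist : T -> T -> R) (A B : set T) : R :=
  sup [set r | exists2 a, A a & r = inf [set s | exists2 b, B b & s = dist a b]].

Definition hausdorff (T : Type) (dist : T -> T -> R) (A B : set T) : R :=
  Num.max (excess dist A B) (excess dist B A).

Definition H_send (X : Type) (d : X -> X -> R) (u v : set (X * R)) : R :=
  hausdorff (dbar d) u v.

End Defs.

(* Main.v *)
Require Import Defs.
From HB Require Import structures.
From mathcomp Require Import all_boot all_order all_algebra.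
From mathcomp Require Import all_classical all_reals.
From mathcomp Require Import lra.
Set Implicit Arguments. Unset Strict Implicit. Unset Printing Implicit Defensive.
Import Order.TTheory GRing.Theory Num.Theory.
Local Open Scope classical_set_scope.
Local Open Scope ring_scope.

Section Basics.
Variable R : realType.

Definition geo (k : nat) : R := (2 ^+ k)^-1.

Lemma geo_gt0 k : 0 < geo k.
Proof. by rewrite /geo invr_gt0 exprn_gt0. Qed.

Lemma geoS k : geo k.+1 = geo k / 2.
Proof. by rewrite /geo exprS invfM mulrC. Qed.

Lemma geo_le k j : (k <= j)%N -> geo j <= geo k.
Proof.
move=> /subnK <-; elim: (j - k)%N => [|n IH]; first by rewrite add0n.
rewrite addSn geoS; apply: le_trans IH; have := geo_gt0 (n + k); lra.
Qed.

Lemma geo_small (e d : R) : 0 < d -> exists j, e * geo j < d.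
Proof.
move=> d0.
have [e0|e0] := lerP e 0.
  by exists 0%N; rewrite /geo expr0 invr1 mulr1; lra.
have := @archi_boundP R (e / d); rewrite ltW ?divr_gt0 // => /(_ isT) H.
set n := Num.Def.archi_bound _ in H.
exists n; rewrite /geo.
have h2 : (n%:R : R) < 2 ^+ n by rewrite -natrX ltr_nat ltn_expl.
have p2 : (0 : R) < 2 ^+ n by rewrite exprn_gt0.
rewrite ltr_pdivrMr // -ltr_pdivrMl //.
rewrite mulrC; apply: lt_trans H _; done.
Qed.

Lemma le_of_forall (x y : R) : (forall e, 0 < e -> x <= y + e) -> x <= y.
Proof. by move=> H; apply/ler_addgt0Pr. Qed.

Lemma R_complete (s : nat -> R) :
  (forall e, 0 < e -> exists N, forall m n, (N <= m)%N -> (N <= n)%N -> `|s m - s n| < e) ->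
  exists l, forall e, 0 < e -> exists N, forall n, (N <= n)%N -> `|s n - l| < e.
Proof.
move=> C.
pose E := [set x | exists N, forall n, (N <= n)%N -> x <= s n].
have [N0 H0] := C 1 ltr01.
have Ene : E !=set0.
  exists (s N0 - 1), N0 => n Nn; have := H0 _ _ Nn (leqnn _).
  rewrite ltr_norml; lra.
have Eub : ubound E (s N0 + 1).
  move=> x [M HM]; have h1 := HM (maxn M N0) (leq_maxl _ _).
  have := H0 (maxn M N0) N0 (leq_maxr _ _) (leqnn _); rewrite ltr_norml; lra.
have hs : has_sup E by split => //; exists (s N0 + 1).
exists (sup E) => e e0.
have e20 : 0 < e / 2 by rewrite divr_gt0.
have [N HN] := C _ e20.
have h1 : s N - e / 2 <= sup E.
  apply: ub_le_sup; first by exists (s N0 + 1).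
  exists N => n Nn; have := HN _ _ Nn (leqnn _); rewrite ltr_norml; lra.
have h2 : sup E <= s N + e / 2.
  apply: ge_sup => // x [M HM]; have h3 := HM (maxn M N) (leq_maxl _ _).
  have := HN (maxn M N) N (leq_maxr _ _) (leqnn _); rewrite ltr_norml; lra.
exists N => n Nn; have := HN _ _ Nn (leqnn _); rewrite !ltr_norml; lra.
Qed.

Lemma list_bound (T : Type) (f : T -> R) (l : seq T) :
  exists M, forall c, List.In c l -> f c <= M.
Proof.
elim: l => [|a l [M HM]]; first by exists 0.
exists (Num.max (f a) M) => c /= [<-|/HM h]; first by rewrite le_max lexx.
by rewrite le_max h orbT.
Qed.

Lemma list_boundn (T : Type) (f : T -> nat) (l : seq T) :
  exists M, forall c, List.In c l -> (f c <= M)%N.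
Proof.
elim: l => [|a l [M HM]]; first by exists 0%N.
exists (maxn (f a) M) => c /= [<-|/HM h]; first by rewrite leq_maxl.
by rewrite (leq_trans h) // leq_maxr.
Qed.

Lemma list_bound2 (T : Type) (g : T -> T -> R) (l : seq T) :
  exists M, forall c c', List.In c l -> List.In c' l -> g c c' <= M.
Proof.
elim: l => [|a l [M HM]]; first by exists 0.
have [M1 H1] := list_bound (g a) (a :: l).
have [M2 H2] := list_bound (fun c => g c a) (a :: l).
exists (Num.max M (Num.max M1 M2)) => c c' /= Hc Hc'.
case: Hc => [<-|Hc].
  by rewrite !le_max H1 ?orbT.
case: Hc' => [<-|Hc'].
  by rewrite !le_max (H2 c) ?orbT //=; right.
by rewrite le_max HM.
Qed.

End Basics.

Section Metric.
#[local] Set Default Proof Using "All".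
Variables (R : realType) (T : Type) (rho : T -> T -> R).
Hypothesis rho0 : forall x, rho x x = 0.
Hypothesis rhoC : forall x y, rho x y = rho y x.
Hypothesis rhoT : forall x y z, rho x z <= rho x y + rho y z.

Lemma rho_ge0 x y : 0 <= rho x y.
Proof. have := rhoT x y x; rewrite rho0 (rhoC y x); lra. Qed.

Definition TB (K : set T) := forall e, 0 < e -> exists s : seq T,
  forall x, K x -> exists c, List.In c s /\ rho c x < e.
Definition bnd (K : set T) := exists M, forall x y, K x -> K y -> rho x y <= M.
Definition cauchy (s : nat -> T) := forall e, 0 < e -> exists N, forall m n,
  (N <= m)%N -> (N <= n)%N -> rho (s m) (s n) < e.
Definition conv (s : nat -> T) l := forall e, 0 < e -> exists N, forall n,
  (N <= n)%N -> rho (s n) l < e.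
Definition CC (K : set T) := forall s, (forall n, K (s n)) -> cauchy s ->
  exists2 l, K l & conv s l.

Lemma TB_bnd K : TB K -> bnd K.
Proof.
move=> /(_ 1 ltr01) [s Hs].
have [M HM] := list_bound2 rho s.
exists (M + 2) => x y Kx Ky.
have [c [cs cx]] := Hs _ Kx; have [c' [cs' cy]] := Hs _ Ky.
have := HM _ _ cs cs'; have := rhoT x c y; have := rhoT c c' y.
rewrite (rhoC x c); lra.
Qed.

Lemma excess_le (A B : set T) r : A !=set0 ->
  (forall a, A a -> exists2 b, B b & rho a b <= r) -> excess rho A B <= r.
Proof.
move=> [a0 Aa0] H; apply: ge_sup.
  by exists (inf [set s | exists2 b, B b & s = rho a0 b]), a0.
move=> _ [a Aa ->]; have [b Bb ab] := H _ Aa.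
apply: le_trans ab; apply: ge_inf; last by exists b.
by exists 0 => _ [b' _ ->]; exact: rho_ge0.
Qed.

Lemma inf_le_excess (A B : set T) a : bnd A -> B !=set0 -> A a ->
  inf [set s | exists2 b, B b & s = rho a b] <= excess rho A B.
Proof.
move=> [M HM] [b0 Bb0] Aa; apply: ub_le_sup; last by exists a.
exists (M + rho a b0) => _ [a' Aa' ->].
have h : inf [set s | exists2 b, B b & s = rho a' b] <= rho a' b0.
  apply: ge_inf; last by exists b0.
  by exists 0 => _ [b' _ ->]; exact: rho_ge0.
have := HM _ _ Aa' Aa; have := rhoT a' a b0; lra.
Qed.

Lemma excess_lt (A B : set T) a r : bnd A -> B !=set0 -> A a ->
  excess rho A B < r -> exists2 b, B b & rho a b < r.
Proof.
move=> bA [b0 Bb0] Aa H.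
have := le_lt_trans (inf_le_excess bA (ex_intro _ b0 Bb0) Aa) H.
move=> /inf_lt [|_ [b Bb ->] h]; last by exists b.
by exists (rho a b0), b0.
Qed.

Lemma hausdorff_lt (A B : set T) a r : bnd A -> bnd B -> A !=set0 -> B !=set0 ->
  hausdorff rho A B < r ->
  (A a -> exists2 b, B b & rho a b < r) /\ (B a -> exists2 b, A b & rho a b < r).
Proof.
move=> bA bB nA nB; rewrite /hausdorff gt_max => /andP[h1 h2]; split => H.
  exact: excess_lt h1.
exact: excess_lt h2.
Qed.

Lemma hausdorff_le (A B : set T) r : A !=set0 -> B !=set0 ->
  (forall a, A a -> exists2 b, B b & rho a b <= r) ->
  (forall a, B a -> exists2 b, A b & rho a b <= r) ->
  hausdorff rho A B <= r.
Proof.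
by move=> nA nB H1 H2; rewrite /hausdorff ge_max !excess_le.
Qed.

Lemma ball_open c e : open_in rho (fun y => rho c y < e).
Proof.
move=> y cy; exists (e - rho c y); first by lra.
move=> z yz; have := rhoT c y z; lra.
Qed.

Lemma compact_TB K : compact_in rho K -> TB K.
Proof.
move=> cK e e0.
have [s Hs] := cK T (fun c y => rho c y < e) (fun c => @ball_open c e)
   (fun x _ => ex_intro _ x (eq_ind_r (fun t => t < e) e0 (rho0 x))).
by exists s.
Qed.

Lemma compact_cluster K (s : nat -> T) : compact_in rho K -> (forall n, K (s n)) ->
  exists2 y, K y & forall e, 0 < e -> forall N, exists n, (N <= n)%N /\ rho (s n) y < e.
Proof.
move=> cK Ks; apply: contrapT => Hn.
have H : forall y, exists p : R * nat, K y -> 0 < p.1 /\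
    forall n, (p.2 <= n)%N -> p.1 <= rho (s n) y.
  move=> y; have [Ky|nKy] := pselect (K y); last by exists (1, 0%N).
  have : ~ (forall e, 0 < e -> forall N, exists n, (N <= n)%N /\ rho (s n) y < e).
    by move=> h; apply: Hn; exists y.
  move=> /existsNP [e /not_implyP [e0 /existsNP [N HN]]].
  exists (e, N) => _; split => // n Nn /=.
  have [//|h] := lerP e (rho (s n) y).
  by exfalso; apply: HN; exists n.
have [g Hg] := choice H.
have opn : forall y, open_in rho (fun z => K y /\ rho y z < (g y).1).
  move=> y x [Kx xz]; have := @ball_open y (g y).1 _ xz => -[r r0 Hr].
  by exists r => // z /Hr.
have cov : forall x, K x -> exists y, K y /\ rho y x < (g y).1.
  by move=> x Kx; exists x; rewrite rho0; case: (Hg x Kx).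
have [l Hl] := cK T _ opn cov.
have [M HM] := list_boundn (fun y => (g y).2) l.
have [i [il [Ki iN]]] := Hl _ (Ks M).
have [_ h] := Hg i Ki; have := h M (HM _ il); rewrite rhoC; lra.
Qed.


Definition finsub (I : Type) (U : I -> set T) (S : set T) :=
  exists l : seq I, forall x, S x -> exists i, List.In i l /\ U i x.

Lemma finsub_sub I (U : I -> set T) S S' : S' `<=` S -> finsub U S -> finsub U S'.
Proof. by move=> SS [l Hl]; exists l => x /SS /Hl. Qed.

Lemma finsub_cover I (U : I -> set T) (cs : seq T) e : forall S,
  (forall x, S x -> exists c, List.In c cs /\ rho c x < e) ->
  (forall c, List.In c cs -> finsub U (S `&` (fun x => rho c x < e))) -> finsub U S.
Proof.
elim: cs => [|c cs IH] S Hc Hf.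
  by exists nil => x /Hc [c [[]]].
have [l1 H1] := Hf c (or_introl erefl).
have [l2 H2] : finsub U (S `&` (fun x => ~ rho c x < e)).
  apply: IH.
  - move=> x [Sx nx]; have [c' [[<-|c'cs] h]] := Hc _ Sx; first by [].
    by exists c'.
  - move=> c' c'cs; apply: finsub_sub (Hf c' (or_intror c'cs)).
    by move=> x [[Sx _] h].
exists (l1 ++ l2)%list => x Sx.
case: (pselect (rho c x < e)) => h.
  have [i [il Ui]] := H1 x (conj Sx h); exists i; split => //.
  by apply: List.in_or_app; left.
have [i [il Ui]] := H2 x (conj Sx h); exists i; split => //.
by apply: List.in_or_app; right.
Qed.

Lemma TB_CC_compact K : TB K -> CC K -> compact_in rho K.
Proof.
move=> tK cK I U Uo Ucov; apply: contrapT => nfK.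
have [x0 Kx0] : exists x, K x.
  apply: contrapT => h; apply: nfK; exists nil => x Kx; exfalso; by apply: h; exists x.
have step : forall p : set T * R, exists c, p.1 `<=` K -> ~ finsub U p.1 -> 0 < p.2 ->
   ~ finsub U (p.1 `&` (fun x => rho c x < p.2)).
  move=> [S e] /=.
  case: (pselect (S `<=` K /\ ~ finsub U S /\ 0 < e)) => [[SK [nS e0]]|hh]; last first.
    by exists x0 => SK nS e0; exfalso; apply: hh.
  have [cs Hcs] := tK e e0.
  apply: contrapT => hn.
  exfalso; apply: nS; apply: (@finsub_cover _ U cs e S).
    by move=> x /SK /Hcs.
  move=> c _; apply: contrapT => nfc; apply: hn; exists c => _ _ _; exact nfc.
have [h Hh] := choice step.
pose Sq := fix Sq (k : nat) : set T := match k with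
  | 0%N => K
  | k'.+1 => Sq k' `&` (fun x => rho (h (Sq k', geo R k')) x < geo R k') end.
have SqS : forall k, Sq k.+1 = Sq k `&` (fun x => rho (h (Sq k, geo R k)) x < geo R k).
  by [].
have inv : forall k, Sq k `<=` K /\ ~ finsub U (Sq k).
  elim=> [|k [SK nS]]; first by split.
  rewrite SqS; split; first by move=> x [/SK].
  exact: (Hh (Sq k, geo R k) SK nS (geo_gt0 _ _)).
have mono : forall k j, (k <= j)%N -> Sq j `<=` Sq k.
  move=> k j /subnK <-; elim: (j - k)%N => [|n IHn] //.
  by rewrite addSn SqS => x [/IHn].
have ball : forall k, Sq k.+1 `<=` (fun x => rho (h (Sq k, geo R k)) x < geo R k).
  by move=> k x; rewrite SqS => -[].
have pts : forall k, exists x, Sq k.+1 x.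
  move=> k; apply: contrapT => hn; apply: (inv k.+1).2; exists nil => x Sx.
  by exfalso; apply: hn; exists x.
have [xs Hxs] := choice pts.
have Kxs : forall k, K (xs k) by move=> k; apply: (inv k.+1).1; apply: Hxs.
have cxs : cauchy xs.
  move=> e e0; have [j Hj] := geo_small 2 e0; exists j => m n jm jn.
  have hm := ball j _ (mono j.+1 m.+1 jm _ (Hxs m)).
  have hn := ball j _ (mono j.+1 n.+1 jn _ (Hxs n)).
  have := rhoT (xs m) (h (Sq j, geo R j)) (xs n); rewrite rhoC in hm; lra.
have [y Ky cy] := cK _ Kxs cxs.
have [i Ui] := Ucov _ Ky.
have [r r0 Hr] := Uo i y Ui.
have [j Hj] := geo_small 3 r0.
have [M HM] := cy _ (geo_gt0 R j).
apply: (inv j.+1).2; exists (i :: nil) => z Sz; exists i; split; first by left.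
apply: Hr.
have hz := ball j _ Sz.
have hm := ball j _ (mono _ _ (leq_maxl j M : (j.+1 <= (maxn j M).+1)%N) _ (Hxs (maxn j M))).
have hM := HM (maxn j M) (leq_maxr _ _).
have := rhoT y (xs (maxn j M)) z; have := rhoT (xs (maxn j M)) (h (Sq j, geo R j)) z.
have e1 := rhoC (xs (maxn j M)) (h (Sq j, geo R j)); have e2 := rhoC (xs (maxn j M)) y; lra.
Qed.

Lemma compact_CC K : compact_in rho K -> CC K.
Proof.
move=> cK s Ks cs; have [y Ky Hy] := compact_cluster cK Ks.
exists y => // e e0.
have e2 : 0 < e / 2 by rewrite divr_gt0.
have [N HN] := cs _ e2; exists N => n Nn.
have [m [Nm hm]] := Hy _ e2 N.
have := HN _ _ Nn Nm; have := rhoT (s n) (s m) y; lra.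
Qed.


Section Hyper.
Hypothesis Tcomp : forall s, cauchy s -> exists l, conv s l.
Variable A : nat -> set T.
Hypothesis Ane : forall n, A n !=set0.
Hypothesis Abnd : forall n, bnd (A n).
Hypothesis AC : forall e, 0 < e -> exists N, forall m n, (N <= m)%N -> (N <= n)%N ->
  hausdorff rho (A m) (A n) < e.

Definition clset := fun x => forall e, 0 < e -> forall N, exists n, (N <= n)%N /\
  exists2 a, A n a & rho a x < e.

Lemma cl_near e : 0 < e -> exists N, forall n, (N <= n)%N -> forall x, clset x ->
  exists2 a, A n a & rho x a < e.
Proof.
move=> e0; have e2 : 0 < e / 2 by rewrite divr_gt0.
have [N HN] := AC e2; exists N => n Nn x clx.
have [m [Nm [a Aa ax]]] := clx _ e2 N.
have [h1 _] := hausdorff_lt a (Abnd m) (Abnd n) (Ane m) (Ane n) (HN _ _ Nm Nn).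
have [b Ab ab] := h1 Aa.
exists b => //; have := rhoT x a b; rewrite (rhoC x a); lra.
Qed.

Lemma chain e : 0 < e -> exists N, forall n, (N <= n)%N -> forall a, A n a ->
  exists2 x, clset x & rho a x <= 2 * e.
Proof.
move=> e0.
have hN : forall r : R, exists N, 0 < r -> forall m n, (N <= m)%N ->
   (N <= n)%N -> hausdorff rho (A m) (A n) < r.
  move=> r; have [r0|r0] := ltrP 0 r; last by exists 0%N => h; exfalso; lra.
  by have [N HN] := AC r0; exists N.
have [Nf HNf] := choice hN.
pose ej j := e * geo R j.
have ej0 : forall j, 0 < ej j by move=> j; rewrite mulr_gt0 ?geo_gt0.
have ejS : forall j, ej j.+1 = ej j / 2 by move=> j; rewrite /ej geoS mulrA.
pose K j := (j + \sum_(i < j.+1) Nf (ej i))%N.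
have Kge : forall j, (j <= K j)%N by move=> j; rewrite leq_addr.
have KN : forall j, (Nf (ej j) <= K j)%N.
  by move=> j; rewrite /K big_ord_recr /= addnA leq_addl.
have Kmono : forall j, (K j <= K j.+1)%N.
  move=> j; rewrite /K [X in (_ <= _ + X)%N]big_ord_recr /= addnA addSn.
  exact: leq_trans (leqnSn _) (leq_addr _ _).
exists (K 0%N) => n n0 a Aa.
pose mj j := maxn n (K j).
have m0 : mj 0%N = n by apply/maxn_idPl.
have step : forall p : nat * T, exists y, A (mj p.1) p.2 ->
    A (mj p.1.+1) y /\ rho p.2 y < ej p.1.
  move=> [j x] /=; have [Ax|nAx] := pselect (A (mj j) x); last first.
    by exists x.
  have h1 : (Nf (ej j) <= mj j)%N by rewrite (leq_trans (KN j)) ?leq_maxr.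
  have h2 : (Nf (ej j) <= mj j.+1)%N.
    by rewrite (leq_trans (KN j)) // (leq_trans (Kmono j)) ?leq_maxr.
  have [hh _] := hausdorff_lt x (Abnd _) (Abnd _) (Ane _) (Ane _) (HNf _ (ej0 j) _ _ h1 h2).
  by have [y Ay xy] := hh Ax; exists y.
have [f Hf] := choice step.
pose c := fix c k := match k with 0%N => a | k'.+1 => f (k', c k') end.
have cA : forall k, A (mj k) (c k).
  by elim=> [|k IH] /=; [rewrite m0 | exact: ((Hf (k, c k)) IH).1].
have cS : forall k, rho (c k) (c k.+1) < ej k by move=> k; exact: ((Hf (k, c k)) (cA k)).2.
have gb : forall i k, rho (c i) (c (i + k)%N) <= 2 * ej i - 2 * ej (i + k)%N.
  move=> i; elim=> [|k IH]; first by rewrite addn0 rho0; lra.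
  rewrite addnS; have := rhoT (c i) (c (i + k)%N) (c (i + k).+1).
  have := cS (i + k)%N; rewrite ejS; lra.
have gb' : forall i m, (i <= m)%N -> rho (c i) (c m) < 2 * ej i.
  move=> i m im; have := gb i (m - i)%N; rewrite subnKC //.
  have := ej0 m; lra.
have cc : cauchy c.
  move=> d d0; have [j Hj] := geo_small (4 * e) d0; exists j => m n1 jm jn.
  have := gb' _ _ jm; have := gb' _ _ jn; have := rhoT (c m) (c j) (c n1).
  have := rhoC (c m) (c j); rewrite /ej; rewrite -mulrA in Hj; lra.
have [x cx] := Tcomp cc.
exists x.
  move=> d d0 N0; have [M HM] := cx _ d0.
  exists (mj (maxn N0 M)); split.
    by rewrite (leq_trans (leq_maxl N0 M)) // (leq_trans (Kge _)) // leq_maxr.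
  by exists (c (maxn N0 M)); [exact: cA | apply: HM; rewrite leq_maxr].
apply: le_of_forall => d d0; have [M HM] := cx _ d0.
have := HM M (leqnn _); have := gb 0%N M; rewrite add0n.
have := rhoT a (c M) x; have := ej0 M.
have -> : ej 0%N = e by rewrite /ej /geo expr0 invr1 mulr1.
rewrite /=; lra.
Qed.

Lemma cl_ne : clset !=set0.
Proof.
have [N HN] := chain ltr01; have [a Aa] := Ane N.
by have [x clx _] := HN N (leqnn _) a Aa; exists x.
Qed.

Lemma cl_conv e : 0 < e -> exists N, forall n, (N <= n)%N ->
  hausdorff rho (A n) clset < e.
Proof.
move=> e0; have e2 : 0 < e / 2 by rewrite divr_gt0.
have e4 : 0 < e / 4 by rewrite divr_gt0.
have [N1 H1] := chain e4; have [N2 H2] := cl_near e2.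
exists (maxn N1 N2) => n nN.
have n1 : (N1 <= n)%N by exact: leq_trans (leq_maxl N1 N2) nN.
have n2 : (N2 <= n)%N by exact: leq_trans (leq_maxr N1 N2) nN.
apply: (@le_lt_trans _ _ (e / 2)); last by lra.
apply: hausdorff_le => //; first exact: cl_ne.
  move=> a Aa; have [x clx ax] := H1 _ n1 _ Aa; exists x => //; lra.
move=> x clx; have [a Aa xa] := H2 _ n2 _ clx; exists a => //; lra.
Qed.

End Hyper.
End Metric.

Section Main.
Variables (R : realType) (X : Type) (d : X -> X -> R).
Hypothesis dxx : forall x, d x x = 0.
Hypothesis dC : forall x y, d x y = d y x.
Hypothesis dT : forall x y z, d x z <= d x y + d y z.

Lemma d_ge0 x y : 0 <= d x y.
Proof. exact: rho_ge0 dxx dC dT x y. Qed.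

Lemma db0 p : dbar d p p = 0.
Proof. by rewrite /dbar dxx subrr normr0 addr0. Qed.

Lemma dbC p q : dbar d p q = dbar d q p.
Proof. by rewrite /dbar dC distrC. Qed.

Lemma dbT p q r : dbar d p r <= dbar d p q + dbar d q r.
Proof.
rewrite /dbar; have := dT p.1 q.1 r.1; have := ler_distD q.2 p.2 r.2; lra.
Qed.

Lemma d_le_db p q : d p.1 q.1 <= dbar d p q.
Proof. by rewrite /dbar lerDl. Qed.

Lemma abs_le_db p q : `|p.2 - q.2| <= dbar d p q.
Proof. by rewrite /dbar lerDr d_ge0. Qed.

Lemma Y_complete : (forall s, cauchy d s -> exists l, conv d s l) ->
  forall s, cauchy (dbar d) s -> exists l, conv (dbar d) s l.
Proof.
move=> Xc s cs.
have [x cx] : exists x, conv d (fun n => (s n).1) x.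
  apply: Xc => e e0; have [N HN] := cs e e0; exists N => m n Nm Nn.
  exact: le_lt_trans (d_le_db _ _) (HN _ _ Nm Nn).
have [r cr] : exists r, forall e, 0 < e -> exists N, forall n, (N <= n)%N ->
    `|(s n).2 - r| < e.
  apply: R_complete => e e0; have [N HN] := cs e e0; exists N => m n Nm Nn.
  exact: le_lt_trans (abs_le_db _ _) (HN _ _ Nm Nn).
exists (x, r) => e e0; have e2 : 0 < e / 2 by rewrite divr_gt0.
have [N1 H1] := cx _ e2; have [N2 H2] := cr _ e2.
exists (maxn N1 N2) => n nN; rewrite /dbar /=.
have := H1 n (leq_trans (leq_maxl _ _) nN); have := H2 n (leq_trans (leq_maxr _ _) nN).
lra.
Qed.

Section PU.
Variable u : set (X * R).
Hypothesis Pu : P_USCB d u.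

Lemma PU_lvl p : u p -> 0 <= p.2 <= 1.
Proof. by case: Pu => h _; apply: h. Qed.

Lemma PU_down x a b : u (x, a) -> 0 <= b <= a -> u (x, b).
Proof.
move=> uxa /andP[b0 ba]; have /andP[a0 a1] := PU_lvl uxa.
have [ab|ab] := leP a b.
  by have -> : b = a by apply/eqP; rewrite eq_le ab ba.
case: Pu => _ [H2 _]; have : cut u a x by [].
rewrite H2 ?(le_lt_trans b0 ab) ?a1 // => /(_ b); rewrite b0 ab; exact.
Qed.

Lemma PU_down0 p : u p -> u (p.1, 0).
Proof.
case: p => x a ua /=; have /andP[a0 _] := PU_lvl ua.
apply: (@PU_down x a 0 ua); by rewrite lexx a0.
Qed.

Lemma PU_cut_compact a : 0 <= a <= 1 -> compact_in d (cut u a).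
Proof. by case: Pu => _ [_ H3] /H3 []. Qed.

Lemma PU_cut_ne a : 0 <= a <= 1 -> exists x, u (x, a).
Proof. by case: Pu => _ [_ H3] /H3 []. Qed.

Lemma PU_ne : u !=set0.
Proof.
have [|x ux] := @PU_cut_ne 0; first by rewrite lexx ler01.
by exists (x, 0).
Qed.

Lemma PU_bnd : bnd (dbar d) u.
Proof.
have cK := @PU_cut_compact 0; rewrite lexx ler01 in cK.
have [M HM] := TB_bnd dxx dC dT (compact_TB dxx dC dT (cK isT)).
exists (M + 1) => p q up uq; have := HM _ _ (PU_down0 up) (PU_down0 uq).
have /andP[p0 p1] := PU_lvl up; have /andP[q0 q1] := PU_lvl uq.
have : `|p.2 - q.2| <= 1 by rewrite ler_norml; apply/andP; split; lra.
rewrite /dbar /=; lra.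
Qed.

End PU.

Lemma db_same x b c : dbar d (x, b) (x, c) = `|b - c|.
Proof. by rewrite /dbar dxx add0r. Qed.

Definition vset (x : X) : set (X * R) := [set p | p.1 = x /\ 0 <= p.2 <= 1].

Lemma P_vset x : P_USCB d (vset x).
Proof.
split; first by move=> p [].
split.
  move=> a /andP[a0 a1]; apply/seteqP; split => z /=.
    rewrite /cut /vset /= => -[-> _] b /andP[b0 ba]; split => //.
    by apply/andP; split; lra.
  rewrite /cut /vset /= => H; have [|-> _] := H 0; first by rewrite lexx a0.
  by split => //; apply/andP; split; lra.
move=> a a01; split; first by exists x; rewrite /cut /vset /=.
move=> I U Uo Ucov; have [i Ui] := Ucov x (conj erefl a01).
by exists (i :: nil) => z [/= -> _]; exists i; split => //; left.
Qed.

Lemma H_vset x y : hausdorff (dbar d) (vset x) (vset y) <= d x y.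
Proof.
apply: (hausdorff_le db0 dbC dbT).
- by exists (x, 0); split => //; rewrite lexx ler01.
- by exists (y, 0); split => //; rewrite lexx ler01.
- move=> [a1 a2] [/= -> h]; exists (y, a2); first by split.
  by rewrite /dbar /= subrr normr0 addr0.
- move=> [a1 a2] [/= -> h]; exists (x, a2); first by split.
  by rewrite /dbar /= subrr normr0 addr0 dC.
Qed.

Lemma dir2 : complete_wrt (P_USCB d) (H_send d) -> complete_wrt [set: X] d.
Proof.
move=> Pc s _ Cs.
have Cv : forall e, 0 < e -> exists N, forall m n, (N <= m)%N -> (N <= n)%N ->
    H_send d (vset (s m)) (vset (s n)) < e.
  move=> e e0; have [N HN] := Cs e e0; exists N => m n Nm Nn.
  exact: le_lt_trans (H_vset _ _) (HN _ _ Nm Nn).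
have [l Pl Hl] := Pc (fun k => vset (s k)) (fun k => P_vset _) Cv.
have [|y ly] := @PU_cut_ne l Pl 0; first by rewrite lexx ler01.
exists y => // e e0; have [N HN] := Hl e e0; exists N => n Nn.
apply: le_lt_trans (HN _ Nn).
rewrite /H_send /hausdorff le_max; apply/orP; right.
have vne : vset (s n) !=set0 by exists (s n, 0); split => //; rewrite lexx ler01.
apply: le_trans (inf_le_excess db0 dbC dbT (PU_bnd Pl) vne ly).
apply: lb_le_inf.
  by exists (dbar d (y, 0) (s n, 0)), (s n, 0) => //; split => //; rewrite lexx ler01.
move=> _ [b [b1 _] ->]; rewrite /dbar b1 /= dC.
by rewrite lerDl normr_ge0.
Qed.

Section Dir1.
Hypothesis Xc : forall s, cauchy d s -> exists l, conv d s l.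
Variable u : nat -> set (X * R).
Hypothesis Pu : forall n, P_USCB d (u n).
Hypothesis Cu : forall e, 0 < e -> exists N, forall m n, (N <= m)%N -> (N <= n)%N ->
  H_send d (u m) (u n) < e.

Let cl := clset (dbar d) u.
Let Ane n := PU_ne (Pu n).
Let Abnd n := PU_bnd (Pu n).
Let Tc := Y_complete Xc.

Lemma cl_lvl p : cl p -> 0 <= p.2 <= 1.
Proof.
move=> clp; apply/andP; split; apply: le_of_forall => e e0;
  have [n [_ [a ua ap]]] := clp e e0 0%N;
  have h := le_lt_trans (abs_le_db a p) ap; rewrite ltr_norml in h;
  have /andP[? ?] := PU_lvl (Pu n) ua; lra.
Qed.

Lemma cl_down p b : cl p -> 0 <= b <= p.2 -> cl (p.1, b).
Proof.
move=> clp /andP[b0 bp] e e0 N; have [n [Nn [a ua ap]]] := clp e e0 N.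
exists n; split => //; case: a ua ap => a1 g ua ap.
have /andP[g0 g1] := PU_lvl (Pu n) ua.
have [gb|bg] := leP g b.
  exists (a1, g) => //; rewrite /dbar /= in ap *.
  have h1 : `|g - b| = b - g by rewrite distrC ger0_norm ?subr_ge0.
  have h2 : p.2 - g <= `|g - p.2| by rewrite distrC ler_norm.
  rewrite h1; lra.
exists (a1, b); first by apply: (PU_down (Pu n) ua); rewrite b0 ltW.
rewrite /dbar /= subrr normr0 addr0; rewrite /dbar /= in ap.
have := normr_ge0 (g - p.2); lra.
Qed.

Lemma cl_up x a : 0 < a -> (forall b, 0 <= b < a -> cl (x, b)) -> cl (x, a).
Proof.
move=> a0 H e e0 N; have e2 : 0 < e / 2 by rewrite divr_gt0.
have [ae|ae] := lerP a (e / 2).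
  have [|n [Nn [c uc ch]]] := H 0 _ _ e2 N; first by rewrite lexx a0.
  exists n; split => //; exists c => //.
  have := dbT c (x, 0) (x, a); rewrite db_same sub0r normrN gtr0_norm //; lra.
have [|n [Nn [c uc ch]]] := H (a - e / 2) _ _ e2 N.
  by apply/andP; split; lra.
exists n; split => //; exists c => //.
have := dbT c (x, a - e / 2) (x, a); rewrite db_same.
have -> : a - e / 2 - a = - (e / 2) by lra.
rewrite normrN gtr0_norm //; lra.
Qed.

Lemma cl_lim s y a : (forall k, cl (s k, a)) -> conv d s y -> cl (y, a).
Proof.
move=> Hs cs e e0 N; have e2 : 0 < e / 2 by rewrite divr_gt0.
have [K HK] := cs _ e2; have [n [Nn [c uc ch]]] := Hs K _ e2 N.
exists n; split => //; exists c => //.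
have := dbT c (s K, a) (y, a); have := HK K (leqnn _).
rewrite /dbar /= subrr normr0 addr0; rewrite /dbar in ch; lra.
Qed.

Lemma cl_cut_compact a : compact_in d (cut cl a).
Proof.
apply: (TB_CC_compact dxx dC dT).
  move=> e e0; have e2 : 0 < e / 2 by rewrite divr_gt0.
  have [N HN] := cl_near db0 dbC dbT Tc Ane Abnd Cu e2.
  have cK : compact_in d (cut (u N) 0).
    by apply: (PU_cut_compact (Pu N)); rewrite lexx ler01.
  have [s Hs] := compact_TB dxx dC dT cK e2.
  exists s => x clx; have [b ub xb] := HN N (leqnn _) _ clx.
  have [c [cs cb]] := Hs b.1 (PU_down0 (Pu N) ub).
  exists c; split => //; have := d_le_db (x, a) b; rewrite /= => h.
  have := dT c b.1 x; rewrite (dC b.1 x); lra.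
move=> s Hs cs; have [y cy] := Xc cs; exists y => //; exact: cl_lim Hs cy.
Qed.

Lemma cl_top : exists y, cl (y, 1).
Proof.
have hq : forall k, exists q, cl q /\ 1 - geo R k <= q.2.
  move=> k; have g2 : 0 < geo R k / 2 by rewrite divr_gt0 ?geo_gt0.
  have [N HN] := chain db0 dbC dbT Tc Ane Abnd Cu g2.
  have [|x1 ux1] := @PU_cut_ne _ (Pu N) 1; first by rewrite ler01 lexx.
  have [q clq hq] := HN N (leqnn _) _ ux1; exists q; split => //.
  have := abs_le_db (x1, 1) q; rewrite /= => h.
  have : `|1 - q.2| <= geo R k by lra.
  by rewrite ler_norml => /andP[_ ?]; lra.
have [qs Hq] := choice hq.
have ys0 : forall k, cut cl 0 (qs k).1.
  move=> k; have [clq _] := Hq k; have /andP[q0 _] := cl_lvl clq.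
  by apply: (cl_down clq); rewrite lexx q0.
have [y cly Hy] := compact_cluster dxx dC dT (@cl_cut_compact 0) ys0.
exists y => e e0 N; have e3 : 0 < e / 3 by rewrite divr_gt0.
have [j Hj] := geo_small 1 e3; rewrite mul1r in Hj.
have [k [jk hk]] := Hy _ e3 j; have [clq qk] := Hq k.
have [n [Nn [a ua ha]]] := clq _ e3 N.
exists n; split => //; exists a => //.
have gk := geo_le R jk; have /andP[_ q1] := cl_lvl clq.
have h : dbar d (qs k) (y, 1) = d (qs k).1 y + (1 - (qs k).2).
  by rewrite /dbar /= distrC ger0_norm ?subr_ge0.
have := dbT a (qs k) (y, 1); rewrite h; lra.
Qed.

Lemma P_cl : P_USCB d cl.
Proof.
split; first exact: cl_lvl.
split.
  move=> a /andP[a0 a1]; apply/seteqP; split => x /=.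
    by move=> clxa b /andP[b0 ba]; apply: (cl_down clxa); rewrite b0 ltW.
  by move=> H; apply: cl_up a0 _ => b hb; exact: H b hb.
move=> a /andP[a0 a1]; split; last exact: cl_cut_compact.
have [y cy] := cl_top; exists y; apply: (cl_down cy); by rewrite /= a0 a1.
Qed.

Lemma dir1_main : exists2 l, P_USCB d l & forall e, 0 < e -> exists N,
  forall n, (N <= n)%N -> H_send d (u n) l < e.
Proof.
exists cl; first exact: P_cl.
move=> e e0; exact: (cl_conv db0 dbC dbT Tc Ane Abnd Cu e0).
Qed.

End Dir1.
End Main.

Unset Implicit Arguments.

Theorem theorem5p13 (R : realType) (X : Type) (d : X -> X -> R) :
  is_metric d ->
  (complete_wrt [set: X] d <-> complete_wrt (P_USCB d) (H_send d)).
Proof.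
move=> [d0 [dC dT]].
have dxx : forall x, d x x = 0 by move=> x; apply/d0.
split; last exact: dir2 dxx dC dT.
move=> C u Pu Cu.
have Xc : forall s, cauchy d s -> exists l, conv d s l.
  by move=> s cs; have [l _ hl] := C s (fun _ => I) cs; exists l.
exact: (dir1_main dxx dC dT Xc Pu Cu).
Qed.
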